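(* Let $p\in(0,1]$, let $(\mathcal M,d,0)$ be a finite pointed $p$-metric space and let $M_1,M_2\subset\mathcal M$ satisfy $M_1\cup M_2=\mathcal M$, $0\in M_2$, $M_1\cap M_2=\{x_0\}$ for some $x_0\in\mathcal M\setminus\{0\}$, and $|M_1|\ge2$. Let $\mathcal M_1=(M_1,d,x_0)$ and $\mathcal M_2=(M_2,d,0)$. Let $T\in\mathcal T(\mathcal M)$, $T_1\in\mathcal T(\mathcal M_1)$ (rooted at $x_0$), $T_2\in\mathcal T(\mathcal M_2)$ (rooted at $0$) be such that $E^T=E^{T_1}\cup E^{T_2}$. Let $a\in\mathbb R^{\mathcal M\setminus\{0\}}$, $a_1:=a|_{M_1\setminus\{x_0\}}$, and $a_2\in\mathbb R^{M_2\setminus\{0\}}$ defined by $a_2(y)=a(y)$ for $y\in M_2\setminus\{0,x_0\}$ and $a_2(x_0)=\sum_{w\in M_1}a(w)$. Then \[T(a)^p=T_1(a_1)^p+T_2(a_2)^p.\]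
   Context: A $p$-metric space is a set with $d$ such that $d^p$ is a metric; pointed means a distinguished base point. For a finite pointed $p$-metric space $(\mathcal K,d,r)$, $\mathcal T(\mathcal K)$ is the set of trees with vertex set $\mathcal K$ rooted at $r$; $E^T$ denotes the (unordered) edge set of $T$. For $x\ne r$, $\mathrm{pred}_T(x)$ is the neighbour of $x$ on the path to $r$, $e_x^T=\{\mathrm{pred}_T(x),x\}$, and $V_x^T$ is the vertex set of the subtree rooted at $x$. For $b\in\mathbb R^{\mathcal K\setminus\{r\}}$, $T(b)=\big(\sum_{x\in\mathcal K\setminus\{r\}}|(\sum_{y\in V_x^T}b_y)\,d(e_x^T)|^p\big)^{1/p}$. *)

(* Defs.v *)
From HB Require Import structures.
From mathcomp Require Import all_boot all_order all_algebra.
From mathcomp Require Import reals exp.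
Set Implicit Arguments. Unset Strict Implicit. Unset Printing Implicit Defensive.
Import Order.TTheory GRing.Theory Num.Theory.
Local Open Scope ring_scope.

Definition is_pmetric (R : realType) (K : finType) (p : R) (d : K -> K -> R) : Prop :=
  [/\ forall x y, 0 <= d x y,
      forall x y, d x y = 0 <-> x = y,
      forall x y, d x y = d y x
    & forall x y z, powR (d x z) p <= powR (d x y) p + powR (d y z) p].

(* A tree with vertex set V rooted at r, encoded by its predecessor map
   par (par x = pred_T(x) for x in V, x != r; par r = r): every vertex of V
   is mapped into V and reaches the root by iterating par. *)
Definition is_rooted_tree (K : finType) (V : {set K}) (r : K) (par : K -> K) : Prop :=
  [/\ r \in V, par r = r
    & forall x, x \in V -> par x \in V /\ exists n, iter n par x = r].

Definition tree_edges (K : finType) (V : {set K}) (r : K) (par : K -> K) : {set {set K}} :=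
  [set [set par x; x] | x in V :\ r].

Definition subtree (K : finType) (V : {set K}) (par : K -> K) (x : K) : {set K} :=
  [set y in V | [exists n : 'I_#|K|.+1, iter n par y == x]].

Definition tree_norm (R : realType) (K : finType) (p : R) (d : K -> K -> R)
    (V : {set K}) (r : K) (par : K -> K) (b : K -> R) : R :=
  powR (\sum_(x in V :\ r) powR `|(\sum_(y in subtree V par x) b y) * d (par x) x| p)
       p^-1.

(* Main.v *)
Require Import Defs.
From HB Require Import structures.
From mathcomp Require Import all_boot all_order all_algebra.
From mathcomp Require Import reals exp.
From mathcomp Require Import zify.
Set Implicit Arguments. Unset Strict Implicit.
Import Order.TTheory GRing.Theory Num.Theory.
Local Open Scope ring_scope.

Lemma L_pair (T : finType) (a b c e : T) :
  [set a; b] = [set c; e] -> (a = c /\ b = e) \/ (a = e /\ b = c).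
Proof.
move=> H.
have ha : a \in [set c; e] by rewrite -H !inE eqxx.
have hb : b \in [set c; e] by rewrite -H !inE eqxx orbT.
have hc : c \in [set a; b] by rewrite H !inE eqxx.
have he : e \in [set a; b] by rewrite H !inE eqxx orbT.
move: ha hb hc he; rewrite !inE.
by case/orP=> /eqP-> ; case/orP=> /eqP-> ; case/orP=> /eqP ? ; case/orP=> /eqP ?; subst; auto.
Qed.

Lemma L_iter_fix (T : Type) (f : T -> T) r n : f r = r -> iter n f r = r.
Proof. by move=> h; elim: n => //= n ->. Qed.

Lemma L_2cycle (T : Type) (f : T -> T) x : f (f x) = x ->
  forall k, iter k f x = x \/ iter k f x = f x.
Proof.
move=> h; elim=> [|k IH] /=; first by left.
by case: IH => ->; auto.
Qed.

Lemma L_iter_in (K : finType) V r (f : K -> K) x n :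
  is_rooted_tree V r f -> x \in V -> iter n f x \in V.
Proof.
case=> _ _ H xV; elim: n => //= n IH; exact: (H _ IH).1.
Qed.

Lemma L_bound (K : finType) V r (f : K -> K) x y n :
  is_rooted_tree V r f -> y \in V -> x != r -> iter n f y = x -> (n <= #|K|)%N.
Proof.
move=> T yV xr hn; case: T => _ fr H.
have ex : exists m, (fun k => iter k f y == r) m.
  by case: (H y yV).2 => m hm; exists m; apply/eqP.
case: (find_ex_minn ex) => m0 /eqP Pm0 minm.
have nm : (n < m0)%N.
  rewrite ltnNge; apply/negP => le.
  move: hn; rewrite -(subnK le) iterD Pm0 L_iter_fix // => e.
  by rewrite e eqxx in xr.
have step : forall i j : nat, (i < j)%N -> (j < m0)%N -> iter i f y = iter j f y -> False.
  move=> i j ij jm e.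
  have : iter (m0 - j + i) f y == r.
    by rewrite iterD e -iterD subnK ?Pm0 // ltnW.
  move/minm; lia.
have inj : injective (fun i : 'I_m0 => iter i f y).
  move=> i j /= e; apply/val_inj => /=.
  case: (ltngtP i j) => // c.
  - by case: (step _ _ c (ltn_ord j) e).
  - by case: (step _ _ c (ltn_ord i) (esym e)).
have := leq_card _ inj; rewrite card_ord; lia.
Qed.

Lemma L_subtree (K : finType) V r (f : K -> K) x y :
  is_rooted_tree V r f -> x != r ->
  (y \in subtree V f x) <-> (y \in V /\ exists n, iter n f y = x).
Proof.
move=> T xr; rewrite inE; split.
  by case/andP=> yV /existsP [n /eqP h]; split => //; exists n.
case=> yV [n hn]; rewrite yV /=; apply/existsP.
have b : (n < #|K|.+1)%N by rewrite ltnS; exact: (L_bound T yV xr hn).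
by exists (Ordinal b); apply/eqP.
Qed.

Lemma L_agree (K : finType) (V : {set K}) r (f g : K -> K) :
  (forall z, z \in V -> z != r -> f z = g z /\ f z \in V) ->
  forall n y, y \in V -> (forall k, (k < n)%N -> iter k f y != r) ->
  iter n f y = iter n g y /\ iter n f y \in V.
Proof.
move=> H; elim=> [|n IH] y yV hk //=.
case: (IH y yV (fun k kn => hk k (ltnW kn))) => e iV.
have := H _ iV (hk n (ltnSn n)); rewrite e => -[-> ->]; by [].
Qed.

Lemma L_uniq (K : finType) (V : {set K}) r (par' par : K -> K) o :
  is_rooted_tree V r par' ->
  (forall x, x \in V -> x != r -> [set par x; x] \in tree_edges V r par') ->
  (forall x, x \in V -> x != r -> x != o) ->
  forall n x, x \in V -> iter n par x = o -> x != r -> par' x = par x.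
Proof.
move=> [rV pr HT] HE Ho; elim=> [|n IH] x xV hn xr.
  by move: (Ho x xV xr); rewrite -hn /= eqxx.
case/imsetP: (HE x xV xr) => z zin /L_pair.
move: zin; rewrite !inE => /andP [zr zV].
case=> -[e1 e2]; first by subst.
have yr : par x != r by rewrite e1.
have yV : par x \in V by rewrite e1.
have := IH (par x) yV; rewrite -iterSr => /(_ hn yr) e3.
have cyc : par (par x) = x by rewrite -e3 e1 -e2.
case: (L_2cycle cyc n.+1) => e4.
  by move: (Ho x xV xr); rewrite -e4 hn eqxx.
by move: (Ho _ yV yr); rewrite -e4 hn eqxx.
Qed.

Unset Implicit Arguments.

Theorem lemma3p13 (R : realType) (p : R) (K : finType) (d : K -> K -> R) (o : K)
    (M1 M2 : {set K}) (x0 : K)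
    (par par1 par2 : K -> K) (a : K -> R) :
  0 < p -> p <= 1 ->
  is_pmetric p d ->
  M1 :|: M2 = [set: K] ->
  o \in M2 ->
  x0 != o ->
  M1 :&: M2 = [set x0] ->
  (1 < #|M1|)%N ->
  is_rooted_tree [set: K] o par ->
  is_rooted_tree M1 x0 par1 ->
  is_rooted_tree M2 o par2 ->
  tree_edges [set: K] o par = tree_edges M1 x0 par1 :|: tree_edges M2 o par2 ->
  let a2 := fun y => if y == x0 then \sum_(w in M1) a w else a y in
  powR (tree_norm p d [set: K] o par a) p =
    powR (tree_norm p d M1 x0 par1 a) p + powR (tree_norm p d M2 o par2 a2) p.
Proof.
move=> p0 p1 _ HU oM2 x0o HI _ T T1 T2 HE a2.
have x0M : x0 \in M1 :&: M2 by rewrite HI set11.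
have x0M1 : x0 \in M1 by move: x0M; rewrite inE => /andP[].
have x0M2 : x0 \in M2 by move: x0M; rewrite inE => /andP[].
have inter : forall z, z \in M1 -> z \in M2 -> z = x0.
  by move=> z h1 h2; apply/set1P; rewrite -HI inE h1 h2.
have oM1 : o \notin M1.
  by apply/negP => h; move: x0o; rewrite (inter o h oM2) eqxx.
have cover : forall z, z \in M1 \/ z \in M2.
  move=> z; have : z \in M1 :|: M2 by rewrite HU inE.
  by rewrite inE => /orP.
have Eedge : forall x, x != o -> [set par x; x] \in tree_edges M1 x0 par1 :|: tree_edges M2 o par2.
  by move=> x xo; rewrite -HE; apply/imsetP; exists x => //; rewrite !inE xo.
case: (T) => _ po HT. case: (T1) => _ p1x0 HT1. case: (T2) => _ p2o HT2.
have H1 : forall x, x \in M1 -> x != x0 -> par1 x = par x.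
  move=> x xM xx0; case: (HT x (in_setT x)) => _ [n hn].
  apply: (@L_uniq K M1 x0 par1 par o T1 _ _ n x xM hn xx0).
  - move=> y yM yx0.
    have yo : y != o by apply/negP => /eqP e; rewrite -e yM in oM1.
    move: (Eedge y yo); rewrite inE => /orP [] // /imsetP [z zin /L_pair].
    move: zin; rewrite !inE => /andP [zo zM2].
    have pzM : par2 z \in M2 by exact: (HT2 z zM2).1.
    move=> hor; have : y \in M2 by case: hor => -[_ ->].
    by move/(inter y yM) => e; rewrite e eqxx in yx0.
  - by move=> y yM _; apply/negP => /eqP e; rewrite -e yM in oM1.
have H2 : forall x, x \in M2 -> x != o -> par2 x = par x.
  move=> x xM xo; case: (HT x (in_setT x)) => _ [n hn].
  apply: (@L_uniq K M2 o par2 par o T2 _ _ n x xM hn xo) => //.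
  move=> y yM yo.
  move: (Eedge y yo); rewrite inE => /orP [] // /imsetP [z zin /L_pair].
  move: zin; rewrite !inE => /andP [zx0 zM1].
  have pzM : par1 z \in M1 by exact: (HT1 z zM1).1.
  case=> -[e1 e2].
    by move: zx0; rewrite -e2 (inter y) ?eqxx // e2.
  have yx0 : y = x0 by apply: inter => //; rewrite e2.
  have cyc : par (par y) = y by rewrite e1 -H1 // -e2.
  case: (HT y (in_setT y)) => _ [m hm].
  have zo : z != o by apply/negP => /eqP e; rewrite -e zM1 in oM1.
  case: (L_2cycle cyc m) => e4.
    by move: yo; rewrite -e4 hm eqxx.
  by move: zo; rewrite -e1 -e4 hm eqxx.
have M2cl : forall z, z \in M2 -> par z \in M2.
  move=> z zM; case: (eqVneq z o) => [->|zo]; first by rewrite po.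
  by rewrite -H2 //; exact: (HT2 z zM).1.
have iterM2 : forall n z, z \in M2 -> iter n par z \in M2.
  by move=> n z zM; elim: n => //= n IH; exact: M2cl.
have agree1 : forall z, z \in M1 -> z != x0 -> par z = par1 z /\ par z \in M1.
  by move=> z zM zx; rewrite -H1 //; split => //; exact: (HT1 z zM).1.
have agree1' : forall z, z \in M1 -> z != x0 -> par1 z = par z /\ par1 z \in M1.
  by move=> z zM zx; rewrite H1 //; split => //; rewrite -H1 //; exact: (HT1 z zM).1.
have agree2 : forall z, z \in M2 -> z != o -> par z = par2 z /\ par z \in M2.
  by move=> z zM zx; rewrite -H2 //; split => //; exact: (HT2 z zM).1.
have agree2' : forall z, z \in M2 -> z != o -> par2 z = par z /\ par2 z \in M2.
  by move=> z zM zx; rewrite H2 //; split => //; rewrite -H2 //; exact: (HT2 z zM).1.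
have S1 : forall x, x \in M1 -> x != x0 -> subtree [set: K] par x = subtree M1 par1 x.
  move=> x xM xx0.
  have xo : x != o by apply/negP => /eqP e; rewrite -e xM in oM1.
  apply/setP => y; apply/idP/idP.
  - move/(L_subtree y T xo) => [_ [n hn]]; apply/(L_subtree y T1 xx0).
    have yM : y \in M1.
      case: (cover y) => // yM2.
      have e := inter x xM (eq_ind _ (fun u => u \in M2) (iterM2 n y yM2) _ hn).
      by rewrite e eqxx in xx0.
    split => //; exists n.
    have hk : forall k, (k < n)%N -> iter k par y != x0.
      move=> k kn; apply/negP => /eqP e.
      have : x \in M2 by rewrite -hn -(subnK (ltnW kn)) iterD e; exact: iterM2.
      by move/(inter x xM) => e'; rewrite e' eqxx in xx0.
    by case: (L_agree agree1 yM hk) => <- _.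
  - move/(L_subtree y T1 xx0) => [yM [n hn]]; apply/(L_subtree y T xo).
    split; first exact: in_setT.
    exists n.
    have hk : forall k, (k < n)%N -> iter k par1 y != x0.
      move=> k kn; apply/negP => /eqP e.
      move: hn; rewrite -(subnK (ltnW kn)) iterD e L_iter_fix // => e'.
      by rewrite e' eqxx in xx0.
    by case: (L_agree agree1' yM hk) => <- _.
have S2 : forall x, x \in M2 -> x != o ->
    \sum_(y in subtree [set: K] par x) a y = \sum_(y in subtree M2 par2 x) a2 y.
  move=> x xM xo.
  have F1 : forall y, y \in M2 -> (y \in subtree [set: K] par x) = (y \in subtree M2 par2 x).
    move=> y yM; apply/idP/idP.
    - move/(L_subtree y T xo) => [_ [n hn]]; apply/(L_subtree y T2 xo); split => //; exists n.
      have hk : forall k, (k < n)%N -> iter k par y != o.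
        move=> k kn; apply/negP => /eqP e.
        move: hn; rewrite -(subnK (ltnW kn)) iterD e L_iter_fix // => e'.
        by rewrite e' eqxx in xo.
      by case: (L_agree agree2 yM hk) => <-.
    - move/(L_subtree y T2 xo) => [_ [n hn]]; apply/(L_subtree y T xo).
      split; first exact: in_setT.
      exists n.
      have hk : forall k, (k < n)%N -> iter k par2 y != o.
        move=> k kn; apply/negP => /eqP e.
        move: hn; rewrite -(subnK (ltnW kn)) iterD e L_iter_fix // => e'.
        by rewrite e' eqxx in xo.
      by case: (L_agree agree2' yM hk) => <-.
  have F2 : forall y, y \in M1 -> (y \in subtree [set: K] par x) = (x0 \in subtree [set: K] par x).
    move=> y yM; apply/idP/idP.
    - move/(L_subtree y T xo) => [_ [n hn]]; apply/(L_subtree x0 T xo).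
      split; first exact: in_setT.
      case: (boolP [exists k : 'I_n, iter k par y == x0]).
      + case/existsP => k /eqP ek; exists (n - k)%N.
        by rewrite -ek -iterD subnK // ltnW.
      + move=> hne.
        have hk : forall k, (k < n)%N -> iter k par y != x0.
          move=> k kn; apply/negP => e; move/negP: hne; apply; apply/existsP.
          by exists (Ordinal kn).
        case: (L_agree agree1 yM hk) => _ inM.
        exists 0%N => /=; apply: esym; apply: inter => //; by rewrite -hn.
    - move/(L_subtree x0 T xo) => [_ [m hm]]; apply/(L_subtree y T xo).
      split; first exact: in_setT.
      have ex : exists k, (fun k => iter k par1 y == x0) k.
        by case: (HT1 y yM) => _ [k hk]; exists k; apply/eqP.
      case: (find_ex_minn ex) => k /eqP hk mink.
      have hk' : forall j, (j < k)%N -> iter j par1 y != x0.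
        by move=> j jk; apply/negP => /mink; lia.
      case: (L_agree agree1' yM hk') => e _.
      by exists (m + k)%N; rewrite iterD -e hk hm.
  have SP : \sum_(y in subtree [set: K] par x) a y = \sum_(y in subtree [set: K] par x :&: M1) a y + \sum_(y in subtree [set: K] par x :\: M1) a y.
    exact: big_setID.
  rewrite SP.
  have D : subtree [set: K] par x :\: M1 = subtree M2 par2 x :\ x0.
    apply/setP => y; rewrite in_setD in_setD1.
    case: (boolP (y \in M1)) => yM1 /=.
    - case: (eqVneq y x0) => //= yx0.
      apply/esym/negP => /(L_subtree y T2 xo) [yM2 _].
      by rewrite (inter y yM1 yM2) eqxx in yx0.
    - have yM2 : y \in M2 by case: (cover y) => //; rewrite (negbTE yM1).
      have -> : y != x0 by apply/negP => /eqP e; rewrite e x0M1 in yM1.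
      by rewrite F1.
  rewrite D.
  have E2 : \sum_(y in subtree M2 par2 x :\ x0) a y = \sum_(y in subtree M2 par2 x :\ x0) a2 y.
    apply: eq_bigr => y; rewrite in_setD1 => /andP [yx _]; by rewrite /a2 (negbTE yx).
  rewrite E2.
  case: (boolP (x0 \in subtree M2 par2 x)) => x0B.
  - have SP2 : \sum_(y in subtree M2 par2 x) a2 y = a2 x0 + \sum_(y in subtree M2 par2 x :\ x0) a2 y.
      exact: big_setD1.
    rewrite SP2.
    have I : subtree [set: K] par x :&: M1 = M1.
      apply/setP => y; rewrite in_setI; case: (boolP (y \in M1)) => yM; rewrite ?andbF ?andbT //.
      by rewrite F2 // F1.
    rewrite I; have -> : a2 x0 = \sum_(w in M1) a w by rewrite /a2 eqxx.
    by [].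
  - have I : subtree [set: K] par x :&: M1 = set0.
      apply/setP => y; rewrite in_setI in_set0; case: (boolP (y \in M1)) => yM; rewrite ?andbF ?andbT //.
      by rewrite F2 // F1 // (negbTE x0B).
    rewrite I big_set0 add0r.
    have -> : subtree M2 par2 x :\ x0 = subtree M2 par2 x.
      apply/setP => y; rewrite in_setD1; case: (eqVneq y x0) => [->|//].
      by rewrite (negbTE x0B).
    by [].
have pe : p^-1 * p = 1 by rewrite mulVf // gt_eqF.
have PW : forall S : R, 0 <= S -> powR (powR S p^-1) p = S.
  by move=> S S0; rewrite -powRrM pe powRr1.
have FIN : forall S Sa Sb : R, 0 <= S -> 0 <= Sa -> 0 <= Sb -> S = Sa + Sb ->
    (S `^ p^-1) `^ p = (Sa `^ p^-1) `^ p + (Sb `^ p^-1) `^ p.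
  by move=> S Sa Sb h h1 h2 ->; rewrite !PW // addr_ge0.
rewrite /tree_norm; apply: FIN; try (apply: sumr_ge0 => *; exact: powR_ge0).
have SP3 : \sum_(x in [set: K] :\ o) powR `|(\sum_(y in subtree [set: K] par x) a y) * d (par x) x| p =
  \sum_(x in ([set: K] :\ o) :&: M2) powR `|(\sum_(y in subtree [set: K] par x) a y) * d (par x) x| p +
  \sum_(x in ([set: K] :\ o) :\: M2) powR `|(\sum_(y in subtree [set: K] par x) a y) * d (par x) x| p.
  exact: big_setID.
rewrite SP3.
have J1 : ([set: K] :\ o) :&: M2 = M2 :\ o.
  by apply/setP => y; rewrite !inE andbT.
have J2 : ([set: K] :\ o) :\: M2 = M1 :\ x0.
  apply/setP => y; rewrite !inE andbT.
  case: (boolP (y \in M2)) => yM2; case: (boolP (y \in M1)) => yM1 /=.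
  - by rewrite (inter y yM1 yM2) eqxx.
  - by rewrite andbF.
  - have -> : y != o by apply/negP => /eqP e; rewrite e oM2 in yM2.
    by have -> : y != x0 by apply/negP => /eqP e; rewrite e x0M2 in yM2.
  - by case: (cover y); rewrite ?(negbTE yM1) ?(negbTE yM2).
rewrite J1 J2 addrC; congr (_ + _).
- apply: eq_bigr => x; rewrite in_setD1 => /andP [xx0 xM].
  by rewrite S1 // H1.
- apply: eq_bigr => x; rewrite in_setD1 => /andP [xo xM].
  by rewrite S2 // H2.
Qed.
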